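(* For every $k\in\mathbb{N}$, $\mathcal{L}^{(k)}_0$ is a functional Banach space on $T$ containing $\mathcal{P}$ and satisfying: (a) $\mathcal{P}$ is dense in $\mathcal{L}^{(k)}_0$; (b) for each $v\in T$ and each $f\in\mathcal{L}^{(k)}_0$, $p_vf\in\mathcal{L}^{(k)}_0$.
   Context: $T$ is a tree (locally finite, connected, simply connected graph, identified with its vertex set) without terminal vertices, rooted at $o$. $|v|$ is the distance from $o$ to $v$; for $v\ne o$, $v^-$ is the parent of $v$. $T^*=T\setminus\{o\}$, $Df(v)=|f(v)-f(v^-)|$. For $x\ge1$: $\ell_0(x)=1$, $\ell_1(x)=1+\ln x$, $\ell_j(x)=1+\ln\ell_{j-1}(x)$ for $j\ge2$. $\mathcal{L}^{(k)}$ is the space of $f:T\to\mathbb{C}$ with $\sup_{v\in T^*}|v|\prod_{j=0}^{k-1}\ell_j(|v|)Df(v)<\infty$, normed by $\|f\|_k=|f(o)|+\sup_{v\in T^*}|v|\prod_{j=0}^{k-1}\ell_j(|v|)Df(v)$; $\mathcal{L}^{(k)}_0$ is its subspace of $f$ with $\lim_{|v|\to\infty}|v|\prod_{j=0}^{k-1}\ell_j(|v|)Df(v)=0$. A functional Banach space on $T$ is a Banach space of complex functions on $T$ on which every point evaluation $f\mapsto f(v)$ is bounded. For $v\in T$, $S_v$ is the set of $v$ and all its descendants, $p_v=\chi_{S_v}$, and $\mathcal{P}$ is the set of all finite linear combinations $\sum_{i=1}^N a_ip_{v_i}$ with $a_i\in\mathbb{C}$, $v_i\in T$. *)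

(* Defs.v *)
From mathcomp Require Import all_boot all_order all_algebra.
From mathcomp Require Import complex.
From mathcomp Require Import all_classical all_reals exp.
Set Implicit Arguments. Unset Strict Implicit. Unset Printing Implicit Defensive.
Import Order.TTheory GRing.Theory Num.Theory.
Local Open Scope ring_scope.
Local Open Scope classical_set_scope.

Definition cmod (R : realType) (z : R[i]) : R := ComplexField.Normc.normc z.

(** * Rooted trees.
   A tree T rooted at o is given by its vertex type V, the root o and the
   parent map par (par v = v^- for v <> o; convention par o = o). *)

Definition child (V : Type) (o : V) (par : V -> V) (u v : V) : Prop :=
  u <> o /\ par u = v.

(** Hypotheses: every vertex reaches o along parents (connected, simply
    connected, rooted at o), locally finite (finitely many children), no
    terminal vertices (every vertex has degree >= 2: the root has at least two
    children, every other vertex has at least one child). *)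
Definition rooted_tree (V : Type) (o : V) (par : V -> V) : Prop :=
  [/\ par o = o,
      (forall v : V, exists n : nat, iter n par v = o),
      (forall v : V, finite_set [set u | child o par u v]),
      (forall v : V, v <> o -> exists u, child o par u v) &
      (exists u1 u2 : V, [/\ u1 <> u2, child o par u1 o & child o par u2 o])].

Definition depth (V : Type) (o : V) (par : V -> V) (v : V) : nat :=
  xget 0%N [set n : nat | iter n par v = o /\
                           (forall m : nat, (m < n)%N -> iter m par v <> o)].

Definition desc (V : Type) (par : V -> V) (v : V) : set V :=
  [set u | exists n : nat, iter n par u = v].

Definition pchar (R : realType) (V : Type) (par : V -> V) (v : V) : V -> R[i] :=
  fun u => if `[< desc par v u >] then 1 else 0.

Definition Pspan (R : realType) (V : Type) (par : V -> V) : set (V -> R[i]) :=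
  [set f | exists s : seq (R[i] * V),
     f = fun u => \sum_(x <- s) x.1 * pchar R par x.2 u].

Fixpoint ell_aux (R : realType) (j : nat) (x : R) : R :=
  match j with
  | 0%N => 1 + ln x
  | j'.+1 => 1 + ln (ell_aux j' x)
  end.
Definition ell (R : realType) (j : nat) (x : R) : R :=
  match j with
  | 0%N => 1
  | j'.+1 => ell_aux j' x
  end.

Definition weight (R : realType) (k n : nat) : R :=
  n%:R * \prod_(j < k) ell j n%:R.

Definition Df (R : realType) (V : Type) (par : V -> V) (f : V -> R[i]) (v : V) : R :=
  cmod (f v - f (par v)).

Definition wDf (R : realType) (V : Type) (o : V) (par : V -> V) (k : nat)
  (f : V -> R[i]) (v : V) : R :=
  weight R k (depth o par v) * Df par f v.

Definition Lk (R : realType) (V : Type) (o : V) (par : V -> V) (k : nat) :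
  set (V -> R[i]) :=
  [set f | exists M : R, forall v, v <> o -> wDf o par k f v <= M].

Definition Lk0 (R : realType) (V : Type) (o : V) (par : V -> V) (k : nat) :
  set (V -> R[i]) :=
  [set f | Lk o par k f /\
     forall eps : R, 0 < eps -> exists N : nat, forall v, v <> o ->
       (N <= depth o par v)%N -> wDf o par k f v <= eps].

Definition normk (R : realType) (V : Type) (o : V) (par : V -> V) (k : nat)
  (f : V -> R[i]) : R :=
  cmod (f o) + sup [set wDf o par k f v | v in [set v | v <> o]].

Definition linear_space (R : realType) (V : Type) (S : set (V -> R[i])) : Prop :=
  [/\ S (fun _ => 0),
      (forall f g, S f -> S g -> S (f \+ g)) &
      (forall (a : R[i]) f, S f -> S (fun u => a * f u))].

Definition is_norm_on (R : realType) (V : Type)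
  (S : set (V -> R[i])) (N : (V -> R[i]) -> R) : Prop :=
  [/\ (forall f, S f -> 0 <= N f),
      (forall f, S f -> N f = 0 -> f = (fun _ => 0)),
      (forall (a : R[i]) f, S f -> N (fun u => a * f u) = cmod a * N f) &
      (forall f g, S f -> S g -> N (f \+ g) <= N f + N g)].

Definition complete_for (R : realType) (V : Type)
  (S : set (V -> R[i])) (N : (V -> R[i]) -> R) : Prop :=
  forall F : nat -> (V -> R[i]), (forall n, S (F n)) ->
    (forall eps : R, 0 < eps -> exists M : nat, forall m n, (M <= m)%N -> (M <= n)%N ->
       N (fun u => F m u - F n u) <= eps) ->
    exists f, S f /\ forall eps : R, 0 < eps -> exists M : nat, forall n, (M <= n)%N ->
       N (fun u => F n u - f u) <= eps.

Definition bounded_evaluations (R : realType) (V : Type)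
  (S : set (V -> R[i])) (N : (V -> R[i]) -> R) : Prop :=
  forall v : V, exists C : R, forall f, S f -> cmod (f v) <= C * N f.

Definition functional_banach (R : realType) (V : Type)
  (S : set (V -> R[i])) (N : (V -> R[i]) -> R) : Prop :=
  [/\ linear_space S, is_norm_on S N, complete_for S N & bounded_evaluations S N].

(* Main.v *)
Require Import Defs.
From mathcomp Require Import all_boot all_order all_algebra.
From mathcomp Require Import complex.
From mathcomp Require Import all_classical all_reals exp.
From mathcomp Require Import topology normedtype sequences.
From mathcomp Require Import ring lra.
Import Order.TTheory GRing.Theory Num.Theory numFieldNormedType.Exports.
Local Open Scope ring_scope.
Local Open Scope classical_set_scope.
Set Implicit Arguments. Unset Strict Implicit. Unset Printing Implicit Defensive.
Section Cmod.
Variable R : realType.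
Implicit Types x y z : R[i].

Lemma cmod_ge0 z : 0 <= cmod z.
Proof. by case: z => a b; rewrite /cmod /=; exact: sqrtr_ge0. Qed.
Lemma cmod0 : cmod (0 : R[i]) = 0.
Proof. exact: ComplexField.Normc.normc0. Qed.
Lemma cmod1 : cmod (1 : R[i]) = 1.
Proof. exact: ComplexField.Normc.normc1. Qed.
Lemma cmod_eq0 z : cmod z = 0 -> z = 0.
Proof. exact: ComplexField.Normc.eq0_normc. Qed.
Lemma cmodM x y : cmod (x * y) = cmod x * cmod y.
Proof. exact: ComplexField.Normc.normcM. Qed.
Lemma cmodD x y : cmod (x + y) <= cmod x + cmod y.
Proof. exact: (@le_normcD R x y). Qed.
Lemma cmodN x : cmod (- x) = cmod x.
Proof. exact: (@normcN R x). Qed.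
Lemma cmodB x y : cmod (x - y) = cmod (y - x).
Proof. by rewrite -cmodN opprB. Qed.
Lemma cmod_Re z : `|complex.Re z| <= cmod z.
Proof.
case: z => a b; rewrite /cmod /=.
rewrite -sqrtr_sqr; apply: ler_wsqrtr; rewrite lerDl; exact: sqr_ge0.
Qed.
Lemma cmod_Im z : `|complex.Im z| <= cmod z.
Proof.
case: z => a b; rewrite /cmod /=.
rewrite -sqrtr_sqr; apply: ler_wsqrtr; rewrite lerDr; exact: sqr_ge0.
Qed.
Lemma cmod_le_ReIm z : cmod z <= `|complex.Re z| + `|complex.Im z|.
Proof.
case: z => a b; rewrite /cmod /=.
have h0 : 0 <= `|a| + `|b| by rewrite addr_ge0.
have -> : `|a| + `|b| = Num.sqrt ((`|a| + `|b|) ^+ 2) by rewrite sqrtr_sqr (ger0_norm h0).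
apply: ler_wsqrtr.
have ha : `|a| ^+ 2 = a ^+ 2 by rewrite real_normK ?num_real.
have hb : `|b| ^+ 2 = b ^+ 2 by rewrite real_normK ?num_real.
rewrite sqrrD ha hb -addrA [_ *+ 2 + _]addrC addrA lerDl.
by apply: mulrn_wge0; exact: mulr_ge0.
Qed.
Lemma ReB x y : complex.Re (x - y) = complex.Re x - complex.Re y.
Proof. by case: x; case: y. Qed.
Lemma ImB x y : complex.Im (x - y) = complex.Im x - complex.Im y.
Proof. by case: x; case: y. Qed.
End Cmod.
Lemma real_cauchy (R: realType) (u : nat -> R) :
  (forall e : R, 0 < e -> exists M, forall m n, (M <= m)%N -> (M <= n)%N -> `|u m - u n| <= e) ->
  exists l, forall e : R, 0 < e -> exists M, forall n, (M <= n)%N -> `|u n - l| <= e.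
Proof.
move=> H.
have : cvg (u @ \oo).
  apply: cauchy_cvg; apply: cauchy_exP => e e0.
  have [M HM] := H (e/2) (divr_gt0 e0 (ltr0Sn _ 1)).
  exists (u M); exists M => // n /= Mn.
  rewrite /ball /=. apply: (le_lt_trans (HM _ _ (leqnn M) Mn)).
  by rewrite ltr_pdivrMr // ltr_pMr // ltr1n.
move=> /cvgrPdist_le Hc; exists (lim (u @ \oo)) => e e0.
have [M _ HM] := Hc e e0.
exists M => n Mn; rewrite distrC; exact: HM.
Qed.

Lemma complex_cauchy (R: realType) (z : nat -> R[i]) :
  (forall e : R, 0 < e -> exists M, forall m n, (M <= m)%N -> (M <= n)%N -> cmod (z m - z n) <= e) ->
  exists l, forall e : R, 0 < e -> exists M, forall n, (M <= n)%N -> cmod (z n - l) <= e.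
Proof.
move=> H.
have [lr Hr] : exists l, forall e : R, 0 < e -> exists M, forall n, (M <= n)%N -> `|complex.Re (z n) - l| <= e.
  apply: real_cauchy => e e0; have [M HM] := H e e0; exists M => m n Mm Mn.
  by rewrite -ReB; apply: le_trans (cmod_Re _) (HM m n Mm Mn).
have [li Hi] : exists l, forall e : R, 0 < e -> exists M, forall n, (M <= n)%N -> `|complex.Im (z n) - l| <= e.
  apply: real_cauchy => e e0; have [M HM] := H e e0; exists M => m n Mm Mn.
  by rewrite -ImB; apply: le_trans (cmod_Im _) (HM m n Mm Mn).
exists (Complex lr li) => e e0; have e2 : 0 < e / 2 by rewrite divr_gt0.
have [M1 H1] := Hr _ e2; have [M2 H2] := Hi _ e2.
exists (maxn M1 M2) => n; rewrite geq_max => /andP[n1 n2].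
apply: le_trans (cmod_le_ReIm _) _; rewrite ReB ImB /= [X in _ <= X]splitr.
exact: lerD (H1 n n1) (H2 n n2).
Qed.
Section Tree.
Variables (V : Type) (o : V) (par : V -> V).
Hypothesis hT : rooted_tree o par.

Lemma iter_o n : iter n par o = o.
Proof. by elim: n => //= n ->; case: hT. Qed.

Lemma reach v : exists n, iter n par v = o.
Proof. by case: hT. Qed.

Lemma depthP v : iter (depth o par v) par v = o /\
  forall m, (m < depth o par v)%N -> iter m par v <> o.
Proof.
rewrite /depth; apply: (xgetPex 0%N (P := [set n : nat | iter n par v = o /\
                           (forall m : nat, (m < n)%N -> iter m par v <> o)])).
have ex : exists n, `[< iter n par v = o >] by have [n Hn] := reach v; exists n; apply/asboolP.
case: (ex_minnP ex) => n /asboolP Hn Hmin; exists n; split => // m mn Hm.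
have := Hmin m (asboolT Hm); by rewrite leqNgt mn.
Qed.

Lemma depth_le v n : iter n par v = o -> (depth o par v <= n)%N.
Proof.
move=> Hn; rewrite leqNgt; apply/negP => Hlt.
by have [_ H] := depthP v; exact: H _ Hlt Hn.
Qed.

Lemma depth_gt0 v : v <> o -> (0 < depth o par v)%N.
Proof.
move=> vo; rewrite lt0n; apply/negP => /eqP H.
by have [+ _] := depthP v; rewrite H.
Qed.

Lemma desc_o u : desc par o u.
Proof. exact: reach. Qed.

Lemma desc_refl v : desc par v v.
Proof. by exists 0%N. Qed.

Lemma desc_par v u : desc par v (par u) -> desc par v u.
Proof. by case=> n Hn; exists n.+1; rewrite iterSr. Qed.

Lemma desc_parN v u : desc par v u -> u <> v -> desc par v (par u).
Proof.
case=> [[|n]] Hn uv /=; first by [].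
by exists n; rewrite -iterSr.
Qed.

Lemma desc_of_o v : desc par v o -> v = o.
Proof. by case=> n; rewrite iter_o. Qed.

Lemma desc_par_self v : v <> o -> ~ desc par v (par v).
Proof.
move=> vo [n Hn].
have Hp : iter n.+1 par v = v by rewrite iterSr.
have Hj : forall j, iter (j * n.+1) par v = v.
  elim=> [|j IH] //; by rewrite mulSn iterD IH.
have [m Hm] := reach v.
have := Hj m; rewrite -(subnK (leq_pmulr m (ltn0Sn n))) iterD Hm iter_o.
by move=> H; apply: vo.
Qed.

End Tree.
Section Ball.
Variables (V : Type) (o : V) (par : V -> V).
Hypothesis hT : rooted_tree o par.

Definition ball_n (n : nat) := [set w : V | exists j, (j <= n)%N /\ iter j par w = o].

Lemma finite_ball n : finite_set (ball_n n).
Proof.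
elim: n => [|n IH].
  apply: sub_finite_set (finite_set1 o) => w [j [j0 Hj]].
  by move: j0; rewrite leqn0 => /eqP j0; rewrite j0 in Hj.
apply: (sub_finite_set (B := [set o] `|` \bigcup_(v in ball_n n) ([set o] `|` [set u | child o par u v]))).
  move=> w [[|j] [jn Hj]]; first by left.
  right; exists (par w); first by exists j; split => //; rewrite -iterSr.
  have [->|wo] := pselect (w = o); first by left.
  by right; split.
rewrite finite_setU; split; first exact: finite_set1.
apply: bigcup_finite => // v _; rewrite finite_setU; split; first exact: finite_set1.
by case: hT => _ _ H _ _; exact: H.
Qed.

Lemma depth_ball w n : (depth o par w <= n)%N -> ball_n n w.
Proof. by move=> dn; exists (depth o par w); split => //; case: (depthP hT w). Qed.
End Ball.
Section Weight.
Variable R : realType.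

Lemma ell_aux_ge1 j (x : R) : 1 <= x -> 1 <= ell_aux j x.
Proof.
move=> x1; elim: j => [|j IH] /=; rewrite lerDl; exact: ln_ge0.
Qed.

Lemma ell_ge1 j (x : R) : 1 <= x -> 1 <= ell j x.
Proof. by case: j => [|j] x1 //=; exact: ell_aux_ge1. Qed.

Lemma weight_ge1 k n : (0 < n)%N -> 1 <= weight R k n.
Proof.
move=> n0; rewrite /weight; apply: mulr_ege1; first by rewrite ler1n.
apply: (big_ind (fun x : R => 1 <= x)) => //; first exact: mulr_ege1.
move=> j _; apply: ell_ge1; by rewrite ler1n.
Qed.

Lemma weight_ge0 k n : 0 <= weight R k n.
Proof.
case: n => [|n]; first by rewrite /weight mul0r.
have h := @weight_ge1 k n.+1 (ltn0Sn n). apply: le_trans h. exact: ler01.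
Qed.
End Weight.

Section Pchar.
Variables (R : realType) (V : Type) (o : V) (par : V -> V).
Hypothesis hT : rooted_tree o par.

Lemma pchar_par v u : u <> v -> pchar R par v u = pchar R par v (par u).
Proof.
move=> uv; rewrite /pchar.
case: (asboolP (desc par v u)) => H1; case: (asboolP (desc par v (par u))) => H2 //.
- by exfalso; apply: H2; exact: desc_parN.
- by exfalso; apply: H1; exact: desc_par.
Qed.

Lemma cmod_pchar v u : cmod (pchar R par v u) <= 1.
Proof. by rewrite /pchar; case: asboolP => _; rewrite ?cmod1 ?cmod0. Qed.

Lemma pchar_self v : pchar R par v v = 1.
Proof. by rewrite /pchar asboolT //; exact: desc_refl. Qed.

Lemma pchar_parself v : v <> o -> pchar R par v (par v) = 0.
Proof. by move=> vo; rewrite /pchar; case: asboolP => // H; exfalso; exact: (desc_par_self hT vo H). Qed.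

Lemma pchar_root u : pchar R par o u = 1.
Proof. by rewrite /pchar asboolT //; exact: (desc_o hT). Qed.

Lemma pchar_at_o v : v <> o -> pchar R par v o = 0.
Proof. by move=> vo; rewrite /pchar asboolF // => /(desc_of_o hT). Qed.
End Pchar.
Section Main.
Variables (R : realType) (V : Type) (o : V) (par : V -> V).
Hypothesis hT : rooted_tree o par.
Variable k : nat.

Local Notation wD := (@wDf R V o par k).
Local Notation L0 := (@Lk0 R V o par k).
Local Notation L := (@Lk R V o par k).
Local Notation N := (@normk R V o par k).
Definition W (f : V -> R[i]) := [set wD f v | v in [set v | v <> o]].

Lemma exists_nonroot : exists u, u <> o.
Proof. by case: hT => _ _ _ _ [u1 [u2 [_ [h _] _]]]; exists u1. Qed.

Lemma wD_ge0 f v : 0 <= wD f v.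
Proof. by apply: mulr_ge0; [exact: weight_ge0 | exact: cmod_ge0]. Qed.

Lemma W_n0 f : W f !=set0.
Proof. by have [u uo] := exists_nonroot; exists (wD f u); exists u. Qed.

Lemma hasW f : L f -> has_sup (W f).
Proof.
case=> M HM; split; first exact: W_n0.
by exists M => _ [v vo <-]; exact: HM.
Qed.

Lemma wD_le_sup f v : L f -> v <> o -> wD f v <= sup (W f).
Proof. by move=> Lf vo; apply: sup_upper_bound (hasW Lf) _ _; exists v. Qed.

Lemma sup_le f M : (forall v, v <> o -> wD f v <= M) -> sup (W f) <= M.
Proof. by move=> H; apply: ge_sup; [exact: W_n0 | move=> _ [v vo <-]; exact: H]. Qed.

Lemma sup_ge0 f : L f -> 0 <= sup (W f).
Proof.
move=> Lf; have [u uo] := exists_nonroot.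
exact: le_trans (wD_ge0 f u) (wD_le_sup Lf uo).
Qed.

Lemma normkE f : N f = cmod (f o) + sup (W f).
Proof. by []. Qed.

Lemma wD_add f g v : wD (f \+ g) v <= wD f v + wD g v.
Proof.
rewrite /wDf -mulrDr; apply: ler_wpM2l; first exact: weight_ge0.
rewrite /Df /= opprD addrACA; exact: cmodD.
Qed.

Lemma wD_sub f g v : wD (fun u => f u - g u) v <= wD f v + wD g v.
Proof.
rewrite /wDf -mulrDr; apply: ler_wpM2l; first exact: weight_ge0.
rewrite /Df; have -> : f v - g v - (f (par v) - g (par v)) = (f v - f (par v)) + (g (par v) - g v).
  by ring.
rewrite (cmodB (g v)); exact: cmodD.
Qed.

Lemma wD_scale a f v : wD (fun u => a * f u) v = cmod a * wD f v.
Proof. by rewrite /wDf /Df -mulrBr cmodM mulrCA. Qed.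

Lemma wD_tri f g v : wD f v <= wD g v + wD (fun u => f u - g u) v.
Proof.
rewrite /wDf -mulrDr; apply: ler_wpM2l; first exact: weight_ge0.
rewrite /Df; have -> : f v - f (par v) = (g v - g (par v)) + ((f v - g v) - (f (par v) - g (par v))).
  by ring.
exact: cmodD.
Qed.

Lemma wD_const c v : wD (fun _ => c) v = 0.
Proof. by rewrite /wDf /Df subrr cmod0 mulr0. Qed.

Lemma L0_const c : L0 (fun _ => c).
Proof.
split; first by exists 0 => v _; rewrite wD_const.
by move=> eps e0; exists 0%N => v _ _; rewrite wD_const ltW.
Qed.

Lemma L0_add f g : L0 f -> L0 g -> L0 (f \+ g).
Proof.
move=> [[M1 H1] E1] [[M2 H2] E2]; split.
  exists (M1 + M2) => v vo; apply: le_trans (wD_add f g v) _; exact: lerD (H1 v vo) (H2 v vo).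
move=> eps e0; have e2 : 0 < eps / 2 by rewrite divr_gt0.
have [N1 HN1] := E1 _ e2; have [N2 HN2] := E2 _ e2.
exists (maxn N1 N2) => v vo; rewrite geq_max => /andP[n1 n2].
apply: le_trans (wD_add f g v) _; rewrite [X in _ <= X]splitr.
exact: lerD (HN1 v vo n1) (HN2 v vo n2).
Qed.

Lemma L0_scale a f : L0 f -> L0 (fun u => a * f u).
Proof.
move=> [[M H] E]; split.
  exists (cmod a * M) => v vo; rewrite wD_scale; apply: ler_wpM2l (H v vo); exact: cmod_ge0.
move=> eps e0; have c0 : 0 < cmod a + 1 by rewrite ltr_wpDl ?cmod_ge0.
have [N0 HN] := E (eps / (cmod a + 1)) (divr_gt0 e0 c0).
exists N0 => v vo n; rewrite wD_scale.
apply: le_trans (ler_wpM2l (cmod_ge0 a) (HN v vo n)) _.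
rewrite mulrCA; apply: ler_piMr; first exact: ltW.
by rewrite ler_pdivrMr // mul1r lerDl.
Qed.

Lemma L0_sub f g : L0 f -> L0 g -> L0 (fun u => f u - g u).
Proof.
move=> Lf Lg; have -> : (fun u => f u - g u) = f \+ (fun u => (-1) * g u).
  by apply/funext => u /=; rewrite mulN1r.
by apply: L0_add => //; exact: L0_scale.
Qed.

Lemma L0_linear : linear_space L0.
Proof.
split; [exact: L0_const | exact: L0_add | move=> a f; exact: L0_scale].
Qed.

Lemma wD_pmul v f u : u <> v -> wD (fun x => pchar R par v x * f x) u <= wD f u.
Proof.
move=> uv; rewrite /wDf /Df.
have E : pchar R par v u = pchar R par v (par u) by apply: pchar_par.
rewrite E -mulrBr cmodM; apply: ler_wpM2l; first exact: weight_ge0.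
apply: le_trans (ler_wpM2r (cmod_ge0 _) (cmod_pchar _ _ _ _)) _; rewrite mul1r.
exact: lexx.
Qed.

Lemma L0_pmul v f : L0 f -> L0 (fun u => pchar R par v u * f u).
Proof.
move=> [[M H] E]; split.
  exists (Num.max M (wD (fun x => pchar R par v x * f x) v)) => u uo.
  have [->|uv] := pselect (u = v); first by rewrite le_max lexx orbT.
  by rewrite le_max (le_trans (wD_pmul f uv) (H u uo)).
move=> eps e0; have [N0 HN] := E eps e0.
exists (maxn N0 (depth o par v).+1) => u uo; rewrite geq_max => /andP[n1 n2].
have uv : u <> v by move=> Huv; move: n2; rewrite Huv ltnn.
exact: le_trans (wD_pmul f uv) (HN u uo n1).
Qed.

Lemma L0_pchar v : L0 (pchar R par v).
Proof.
have := L0_pmul v (L0_const 1).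
by have -> : (fun u => pchar R par v u * 1) = pchar R par v by apply/funext => u; rewrite mulr1.
Qed.

Lemma Pspan_L0 : Pspan (R:=R) par `<=` L0.
Proof.
move=> f [s ->]; elim: s => [|x s IH].
  have -> : (fun u => \sum_(x <- [::]) x.1 * pchar R par x.2 u) = (fun _ => 0) by apply/funext => u; rewrite big_nil.
  exact: L0_const.
have -> : (fun u => \sum_(y <- x :: s) y.1 * pchar R par y.2 u) =
   (fun u => x.1 * pchar R par x.2 u) \+ (fun u => \sum_(y <- s) y.1 * pchar R par y.2 u).
  by apply/funext => u; rewrite big_cons.
apply: L0_add => //; apply: L0_scale; exact: L0_pchar.
Qed.

Lemma Df_le_wD f v : v <> o -> cmod (f v - f (par v)) <= wD f v.
Proof.
move=> vo; rewrite /wDf /Df; apply: ler_peMl; first exact: cmod_ge0.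
exact: weight_ge1 (depth_gt0 hT vo).
Qed.

Lemma L0_L f : L0 f -> L f.
Proof. by case. Qed.

Lemma N_ge0 f : L0 f -> 0 <= N f.
Proof. by move=> [Lf _]; rewrite normkE addr_ge0 ?cmod_ge0 ?sup_ge0. Qed.

Lemma N_eq0 f : L0 f -> N f = 0 -> f = (fun _ => 0).
Proof.
move=> [Lf _]; rewrite normkE => /eqP; rewrite paddr_eq0 ?cmod_ge0 ?sup_ge0 //.
move=> /andP[/eqP /cmod_eq0 fo /eqP S0].
have step v : v <> o -> f v = f (par v).
  move=> vo; apply/eqP; rewrite -subr_eq0; apply/eqP/cmod_eq0.
  apply/le_anti; rewrite cmod_ge0 andbT -S0.
  exact: le_trans (Df_le_wD f vo) (wD_le_sup Lf vo).
apply/funext => v; have [n Hn] := reach hT v.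
elim: n v Hn => [|n IH] v Hn; first by rewrite /= in Hn; rewrite Hn.
have [->|vo] := pselect (v = o); first by [].
by rewrite step // IH // -iterSr.
Qed.

Lemma sup_scale a f : L0 f -> sup (W (fun u => a * f u)) = cmod a * sup (W f).
Proof.
move=> Lf; have Laf := L0_scale a Lf.
apply/le_anti/andP; split.
  apply: sup_le => v vo; rewrite wD_scale; apply: ler_wpM2l; first exact: cmod_ge0.
  exact: wD_le_sup (L0_L Lf) vo.
have [->|a0] := eqVneq a 0; first by rewrite cmod0 mul0r; exact: sup_ge0 (L0_L (L0_scale 0 Lf)).
have ca : 0 < cmod a.
  by rewrite lt_def cmod_ge0 andbT; apply/eqP => /cmod_eq0 /eqP; rewrite (negbTE a0).
rewrite mulrC -ler_pdivlMr //; apply: sup_le => v vo.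
rewrite ler_pdivlMr // mulrC -wD_scale; exact: wD_le_sup (L0_L Laf) vo.
Qed.

Lemma N_norm : is_norm_on L0 N.
Proof.
split.
- exact: N_ge0.
- exact: N_eq0.
- by move=> a f Lf; rewrite !normkE sup_scale // cmodM mulrDr.
- move=> f g Lf Lg; rewrite !normkE.
  have -> : cmod (f o) + sup (W f) + (cmod (g o) + sup (W g)) =
      (cmod (f o) + cmod (g o)) + (sup (W f) + sup (W g)) by rewrite addrACA.
  apply: lerD; first exact: cmodD.
  apply: sup_le => v vo; apply: le_trans (wD_add f g v) _.
  by apply: lerD; apply: wD_le_sup => //; apply: L0_L.
Qed.

Lemma eval_bound f n v : L f -> iter n par v = o ->
  cmod (f v) <= cmod (f o) + n%:R * sup (W f).
Proof.
move=> Lf; elim: n v => [|n IH] v Hn.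
  by rewrite /= in Hn; rewrite Hn mul0r addr0.
have [->|vo] := pselect (v = o).
  by rewrite lerDl mulr_ge0 ?sup_ge0.
have Hp : iter n par (par v) = o by rewrite -iterSr.
have -> : f v = f (par v) + (f v - f (par v)) by rewrite addrC subrK.
apply: le_trans (cmodD _ _) _.
rewrite mulrSr mulrDl mul1r addrA; apply: lerD; first exact: IH.
exact: le_trans (Df_le_wD f vo) (wD_le_sup Lf vo).
Qed.

Lemma N_eval : bounded_evaluations L0 N.
Proof.
move=> v; have [n Hn] := reach hT v; exists n.+1%:R => f Lf.
apply: le_trans (eval_bound (L0_L Lf) Hn) _.
have S0 := sup_ge0 (L0_L Lf); have C0 := cmod_ge0 (f o).
rewrite normkE mulrDr; apply: lerD.
  by apply: ler_peMl => //; rewrite ler1n.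
by apply: ler_wpM2r => //; rewrite ler_nat.
Qed.

Lemma N_eval' v : exists2 C, 0 < C & forall f, L0 f -> cmod (f v) <= C * N f.
Proof.
have [n Hn] := reach hT v; exists n.+1%:R => // f Lf.
apply: le_trans (eval_bound (L0_L Lf) Hn) _.
have S0 := sup_ge0 (L0_L Lf); have C0 := cmod_ge0 (f o).
rewrite normkE mulrDr; apply: lerD.
  by apply: ler_peMl => //; rewrite ler1n.
by apply: ler_wpM2r => //; rewrite ler_nat.
Qed.

Lemma wD_swap f g u : wD (fun x => f x - g x) u = wD (fun x => g x - f x) u.
Proof. by rewrite /wDf /Df cmodB; congr (_ * cmod _); ring. Qed.

Lemma N_complete : complete_for L0 N.
Proof.
move=> F HF HC.
have Hpt : forall v, exists l, forall e : R, 0 < e -> exists M, forall n, (M <= n)%N -> cmod (F n v - l) <= e.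
  move=> v; apply: complex_cauchy => e e0.
  have [C C0 HCv] := N_eval' v.
  have [M HM] := HC (e / C) (divr_gt0 e0 C0).
  exists M => m n Mm Mn.
  apply: le_trans (HCv _ (L0_sub (HF m) (HF n))) _.
  by rewrite mulrC -ler_pdivlMr // HM.
have [f Hf] := choice Hpt.
have key : forall eps : R, 0 < eps -> exists M, forall n, (M <= n)%N -> forall u, u <> o ->
    cmod (F n o - f o) + wD (fun x => F n x - f x) u <= eps.
  move=> eps e0; have [M HM] := HC eps e0; exists M => n Mn u uo.
  set w := weight R k (depth o par u).
  have w0 : 0 <= w by exact: weight_ge0.
  apply/ler_addgt0Pr => e e0'.
  have c0 : 0 < 1 + 2 * w by rewrite ltr_pwDl // mulr_ge0.
  set d := e / (1 + 2 * w).
  have d0 : 0 < d by rewrite divr_gt0.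
  have [M1 H1] := Hf o d d0; have [M2 H2] := Hf u d d0; have [M3 H3] := Hf (par u) d d0.
  pose m := maxn M (maxn M1 (maxn M2 M3)).
  have Mm : (M <= m)%N by rewrite leq_maxl.
  have h1 : cmod (F m o - f o) <= d by apply: H1; rewrite /m !leq_max leqnn !orbT.
  have h2 : cmod (F m u - f u) <= d by apply: H2; rewrite /m !leq_max leqnn !orbT.
  have h3 : cmod (F m (par u) - f (par u)) <= d by apply: H3; rewrite /m !leq_max leqnn !orbT.
  have Lnm := L0_sub (HF n) (HF m).
  have hN := HM n m Mn Mm.
  have hsup := wD_le_sup (L0_L Lnm) uo.
  have ho : cmod (F n o - f o) <= cmod (F n o - F m o) + d.
    have -> : F n o - f o = (F n o - F m o) + (F m o - f o) by ring.
    by apply: le_trans (cmodD _ _) _; rewrite lerD2l.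
  have hu : wD (fun x => F n x - f x) u <= wD (fun x => F n x - F m x) u + w * (2 * d).
    rewrite /wDf -/w -mulrDr; apply: ler_wpM2l => //; rewrite /Df.
    have -> : F n u - f u - (F n (par u) - f (par u)) =
      (F n u - F m u - (F n (par u) - F m (par u))) + ((F m u - f u) - (F m (par u) - f (par u))) by ring.
    apply: le_trans (cmodD _ _) _; rewrite lerD2l.
    apply: le_trans (cmodD _ _) _; rewrite cmodN mulr2n mulrDl mul1r.
    exact: lerD.
  have -> : e = d * (1 + 2 * w) by rewrite /d mulrVK // unitfE gt_eqF.
  have hN' : cmod (F n o - F m o) + wD (fun x => F n x - F m x) u <= eps.
    apply: le_trans hN; rewrite normkE; apply: lerD; [exact: lexx | exact: hsup].
  lra.
have Lf : L f.
  have [M HM] := key 1 ltr01.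
  have [[B HB] _] := HF M.
  exists (B + 1) => u uo.
  apply: le_trans (wD_tri f (F M) u) _; rewrite wD_swap; apply: lerD; first exact: HB.
  apply: le_trans _ (HM M (leqnn M) u uo); rewrite lerDr; exact: cmod_ge0.
exists f; split.
  split => // eps e0; have e2 : 0 < eps / 2 by rewrite divr_gt0.
  have [M HM] := key _ e2; have [_ HE] := HF M; have [N0 HN0] := HE _ e2.
  exists N0 => u uo Nu.
  apply: le_trans (wD_tri f (F M) u) _; rewrite wD_swap [X in _ <= X]splitr; apply: lerD.
    exact: HN0.
  apply: le_trans _ (HM M (leqnn M) u uo); rewrite lerDr; exact: cmod_ge0.
move=> eps e0; have [M HM] := key eps e0; exists M => n Mn.
rewrite normkE -lerBrDl; apply: sup_le => u uo; rewrite lerBrDl; exact: HM.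
Qed.

Lemma density f : L0 f -> forall eps : R, 0 < eps ->
  exists g, Pspan (R:=R) par g /\ N (fun u => f u - g u) < eps.
Proof.
move=> [Lf E] eps e0; have e2 : 0 < eps / 2 by rewrite divr_gt0.
have [N0 HN0] := E _ e2.
pose B := [set w : {classic V} | w <> o /\ (depth o par w < N0)%N].
have finB : finite_set B.
  apply: (sub_finite_set (B := ball_n o par N0)) (finite_ball hT N0) => w [wo dw].
  by apply: (depth_ball hT); exact: ltnW.
have [s0 Hs] := (finite_seqP B).1 finB.
pose s := undup s0.
have memS : forall w : {classic V}, (w \in s) <-> B w.
  by move=> w; rewrite Hs /= mem_undup.
pose c := fun w : V => f w - f (par w).
pose l := (f o, o) :: [seq (c w, (w : V)) | w <- s].
pose g := fun u => \sum_(x <- l) x.1 * pchar R par x.2 u.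
exists g; split; first by exists l.
have gdiff : forall u, u <> o -> g u - g (par u) = if `[< B u >] then c u else 0.
  move=> u uo; rewrite /g -sumrB.
  under eq_bigr => x _ do rewrite -mulrBr.
  rewrite big_cons !(pchar_root R hT) subrr mulr0 add0r big_map.
  have term : forall w : {classic V},
      c w * (pchar R par w u - pchar R par w (par u)) = if w == (u : {classic V}) then c u else 0.
    move=> w; case: eqP => [->|wu].
      by rewrite (pchar_self R par) (pchar_parself R hT uo) subr0 mulr1.
    have Ew : pchar R par w u = pchar R par w (par u) by apply: pchar_par => H; apply: wu; rewrite H.
    by rewrite Ew subrr mulr0.
  under eq_bigr => w _ do rewrite term.
  case: asboolP => Bu.
    rewrite (bigD1_seq (u : {classic V})) ?undup_uniq //=; last by apply/memS.
    by rewrite eqxx big1 ?addr0 // => w /negbTE ->.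
  have H0 : \sum_(w <- s) (if w == (u : {classic V}) then c u else 0) = 0 :> R[i].
    rewrite big_seq big1 // => w ws; case: eqP => // wu.
    by exfalso; apply: Bu; rewrite -wu; apply/memS.
  exact: H0.
have go : g o = f o.
  have H0 : \sum_(w <- s) c w * pchar R par w o = 0 :> R[i].
    rewrite big_seq big1 // => w ws.
    have [wo _] := (memS w).1 ws.
    by rewrite (pchar_at_o R hT wo) mulr0.
  rewrite /g big_cons (pchar_root R hT) mulr1 big_map.
  apply: etrans (congr1 (fun x => f o + x) H0) _; exact: addr0.
rewrite normkE go subrr cmod0 add0r.
apply: (le_lt_trans (y := eps / 2)); last by rewrite ltr_pdivrMr // ltr_pMr // ltr1n.
apply: sup_le => u uo.
rewrite /wDf /Df.
have -> : f u - g u - (f (par u) - g (par u)) = c u - (g u - g (par u)) by rewrite /c; ring.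
rewrite gdiff //; case: asboolP => Bu.
  by rewrite subrr cmod0 mulr0; exact: ltW.
rewrite subr0; apply: HN0 => //.
by rewrite leqNgt; apply/negP => H; apply: Bu; split.
Qed.

End Main.

Theorem lemma5p4 (R : realType) (V : Type) (o : V) (par : V -> V)
  (hT : rooted_tree o par) (k : nat) :
  [/\ functional_banach (Lk0 (R:=R) o par k) (normk (R:=R) o par k),
      Pspan (R:=R) par `<=` Lk0 (R:=R) o par k,
      (forall f, Lk0 (R:=R) o par k f -> forall eps : R, 0 < eps ->
         exists g, Pspan (R:=R) par g /\ normk (R:=R) o par k (fun u => f u - g u) < eps) &
      (forall (v : V) f, Lk0 (R:=R) o par k f -> Lk0 (R:=R) o par k (fun u => pchar R par v u * f u))].
Proof.
split.
- split.
  + exact: (L0_linear R o par k).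
  + exact: (N_norm R hT k).
  + exact: (N_complete (R:=R) hT (k:=k)).
  + exact: (N_eval R hT k).
- exact: (Pspan_L0 (R:=R) o k).
- move=> f Lf eps e0; have H := density hT Lf e0. exact: H.
- move=> v f Lf; exact: L0_pmul.
Qed.
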